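(* Let $G$ be a graph and $m \geq 1$ an integer. If there exists an optimal packing coloring of $FSSD_m(G)$ which assigns color $1$ to all subdivided vertices, then $\chi_\rho(FSSD_m(G)) = \chi_\rho(FSSD_{m+1}(G))$.
   Context: All graphs are finite and simple. For a positive integer $i$, an $i$-packing in a graph is a set of vertices any two distinct members of which are at distance greater than $i$. A $k$-packing coloring of a graph $H$ is a map $c:V(H)\to\{1,\dots,k\}$ such that $c(u)=c(v)=i$ with $u \neq v$ implies $d_H(u,v)>i$; the packing chromatic number $\chi_\rho(H)$ is the least such $k$, and a $\chi_\rho(H)$-packing coloring is called optimal. For a positive integer $m$, $FSSD_m(G)$ is obtained from $G$ by replacing each edge $uv$ of $G$ by a copy of $K_{2,m}$: the edge $uv$ is deleted and $m$ new vertices are added, each adjacent to exactly $u$ and $v$. These new vertices are called the subdivided vertices of $FSSD_m(G)$. *)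

(* Defs.v *)
From mathcomp Require Import all_boot.
Set Implicit Arguments.
Unset Strict Implicit.
Unset Printing Implicit Defensive.

(* A graph H is given by a finite vertex type V and an adjacency relation
   e : rel V.  [within e k x y] holds iff there is a walk of length at most
   k from x to y, i.e. d_H(x,y) <= k.  Hence d_H(x,y) > k iff
   ~~ within e k x y (vertices in different components are at infinite
   distance). *)
Fixpoint within (V : finType) (e : rel V) (k : nat) (x y : V) : bool :=
  match k with
  | 0 => x == y
  | k'.+1 => (x == y) || [exists z, e x z && within e k' z y]
  end.

Definition packing_coloring (V : finType) (e : rel V) (k : nat) (c : V -> nat)
  : bool :=
  [forall v, (1 <= c v <= k)] &&
  [forall u, forall v, ((u != v) && (c u == c v)) ==> ~~ within e (c u) u v].

(* H admits a k-packing coloring (colorings into {0..k} suffice, as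
   colors must lie in {1..k}). *)
Definition has_packing_coloring (V : finType) (e : rel V) (k : nat) : bool :=
  [exists c : {ffun V -> 'I_k.+1},
     packing_coloring e k (fun v => nat_of_ord (c v))].

Lemma has_packing_coloring_ex (V : finType) (e : rel V) :
  exists k, has_packing_coloring e k.
Proof.
exists #|V|; apply/existsP.
exists [ffun v : V => inord (enum_rank v).+1 : 'I_#|V|.+1].
have Hc (v : V) : nat_of_ord ([ffun v : V => inord (enum_rank v).+1 : 'I_#|V|.+1] v)
            = (enum_rank v).+1.
  by rewrite ffunE inordK // ltnS; exact: ltn_ord.
apply/andP; split.
  by apply/forallP => v; rewrite Hc /=; exact: ltn_ord.
apply/forallP => u; apply/forallP => v; apply/implyP => /andP [Huv].
rewrite !Hc eqSS => /eqP /val_inj /enum_rank_inj Heq.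
by rewrite Heq eqxx in Huv.
Qed.

Definition packing_chromatic (V : finType) (e : rel V) : nat :=
  ex_minn (has_packing_coloring_ex e).

(* Vertices: the vertices of G
   (inl w) and, for each edge {u,v} of G (represented once, with
   enum_rank u < enum_rank v) and each i < m, a subdivided vertex
   inr (u, v, i). *)
Definition fssd_valid (T : finType) (e : rel T) (m : nat)
  (x : T + (T * T * 'I_m)) : bool :=
  match x with
  | inl _ => true
  | inr (u, v, _) => e u v && (enum_rank u < enum_rank v)
  end.

Definition fssd_vert (T : finType) (e : rel T) (m : nat) : finType :=
  {x : T + (T * T * 'I_m) | fssd_valid e x}.

Definition fssd_adj0 (T : finType) (m : nat) (x y : T + (T * T * 'I_m))
  : bool :=
  match x, y with
  | inl w, inr (u, v, _) => (w == u) || (w == v)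
  | inr (u, v, _), inl w => (w == u) || (w == v)
  | _, _ => false
  end.

Definition fssd_adj (T : finType) (e : rel T) (m : nat) : rel (fssd_vert e m) :=
  fun x y => fssd_adj0 (val x) (val y).

Definition subdivided (T : finType) (e : rel T) (m : nat) (x : fssd_vert e m)
  : bool :=
  if val x is inr _ then true else false.

(* Main.v *)
Require Import Defs.
From mathcomp Require Import all_boot.

Set Implicit Arguments.
Unset Strict Implicit.

Lemma within_hom (V W : finType) (e : rel V) (e' : rel W) (f : V -> W) k x y :
  (forall x y, e x y -> e' (f x) (f y)) ->
  within e k x y -> within e' k (f x) (f y).
Proof.
move=> hom; elim: k x => [|k IH] x /=; first by move/eqP->.
case/orP=> [/eqP->|/existsP[z /andP[xz zy]]]; first by rewrite eqxx.
apply/orP; right; apply/existsP; exists (f z); rewrite hom //=; exact: IH.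
Qed.

Lemma pull (V W : finType) (e : rel V) (e' : rel W) (f : V -> W) k c :
  (forall x y, e x y -> e' (f x) (f y)) ->
  packing_coloring e' k c ->
  (forall x y, x != y -> f x = f y -> ~~ within e (c (f x)) x y) ->
  packing_coloring e k (fun v => c (f v)).
Proof.
move=> hom /andP[/forallP H1 /forallP H2] H3; apply/andP; split.
  by apply/forallP => v; exact: H1.
apply/forallP => u; apply/forallP => v; apply/implyP => /andP[uv /eqP cuv] /=.
case: (eqVneq (f u) (f v)) => [fe|fne]; first exact: H3.
have := implyP (forallP (H2 (f u)) (f v)).
rewrite fne cuv eqxx /= => /(_ isT) H.
apply: contra H; exact: within_hom.
Qed.

Lemma hasP (V : finType) (e : rel V) k :
  has_packing_coloring e k <-> exists c, packing_coloring e k c.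
Proof.
split; first by case/existsP => c Hc; exists (fun v => nat_of_ord (c v)).
case=> c /andP[/forallP H1 /forallP H2]; apply/existsP.
exists [ffun v => inord (c v) : 'I_k.+1].
have E v : nat_of_ord ([ffun v => inord (c v) : 'I_k.+1] v) = c v.
  by rewrite ffunE inordK // ltnS; case/andP: (H1 v).
apply/andP; split; first by apply/forallP => v; rewrite E.
apply/forallP => u; apply/forallP => v; rewrite !E; exact: (forallP (H2 u) v).
Qed.

Lemma chi_le (V : finType) (e : rel V) k :
  has_packing_coloring e k -> packing_chromatic e <= k.
Proof. by rewrite /packing_chromatic; case: ex_minnP => k0 _ H; exact: H. Qed.

Lemma chi_has (V : finType) (e : rel V) :
  has_packing_coloring e (packing_chromatic e).
Proof. by rewrite /packing_chromatic; case: ex_minnP. Qed.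

Definition mapr (T : finType) m n (h : 'I_m -> 'I_n) (x : T + (T * T * 'I_m))
  : T + (T * T * 'I_n) :=
  match x with
  | inl w => inl w
  | inr (u, v, i) => inr (u, v, h i)
  end.

Lemma valid_map (T : finType) (e : rel T) m n (h : 'I_m -> 'I_n) x :
  fssd_valid e (mapr h x) = fssd_valid e x.
Proof. by case: x => [//|[[u v] i]]. Qed.

Definition mapv (T : finType) (e : rel T) m n (h : 'I_m -> 'I_n)
  (x : fssd_vert e m) : fssd_vert e n :=
  exist (fun y => fssd_valid e y) (mapr h (sval x))
    (etrans (valid_map e h (sval x)) (svalP x)).

Lemma mapv_hom (T : finType) (e : rel T) m n (h : 'I_m -> 'I_n) (x y : fssd_vert e m) :
  @fssd_adj T e m x y -> @fssd_adj T e n (mapv h x) (mapv h y).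
Proof.
rewrite /fssd_adj /=.
by case: (sval x) => [a|[[u v] i]]; case: (sval y) => [b|[[u' v'] j]].
Qed.

Theorem proposition4 (T : finType) (e : rel T)
  (e_sym : symmetric e) (e_irr : irreflexive e) (m : nat) (hm : 1 <= m) :
  (exists c : fssd_vert e m -> nat,
      packing_coloring (@fssd_adj T e m)
        (packing_chromatic (@fssd_adj T e m)) c
      /\ (forall x : fssd_vert e m, subdivided x -> c x = 1)) ->
  packing_chromatic (@fssd_adj T e m) = packing_chromatic (@fssd_adj T e m.+1).
Proof.
move=> hc; case: m hm hc => [//|m] _ [c [Hc Hsub]].
apply/eqP; rewrite eqn_leq; apply/andP; split.
- have [c2 Hc2] := (hasP _ _).1 (chi_has (@fssd_adj T e m.+2)).
  apply: chi_le; apply/hasP.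
  exists (fun v => c2 (mapv (widen_ord (leqnSn m.+1)) v)).
  apply: pull Hc2 _; first exact: mapv_hom.
  move=> [[a|[[u v] i]] hx] [[b|[[u' v'] j]] hy] xy //= [].
  + by move=> ab; subst b; case/negP: xy; apply/eqP; congr exist; apply: bool_irrelevance.
  + move=> uu vv ij; subst u' v'.
    have ij' : i = j by apply: val_inj; exact: ij.
    subst j; case/negP: xy; apply/eqP; congr exist; apply: bool_irrelevance.
- apply: chi_le; apply/hasP.
  exists (fun v => c (mapv (fun i : 'I_m.+2 => inord (minn i m) : 'I_m.+1) v)).
  apply: pull Hc _; first exact: mapv_hom.
  move=> [[a|[[u v] i]] hx] [[b|[[u' v'] j]] hy] xy //= [].
  + by move=> ab; subst b; case/negP: xy; apply/eqP; congr exist; apply: bool_irrelevance.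
  + move=> _ _ _; rewrite Hsub //= (negbTE xy) /=.
    apply/existsP => [[z /andP[az /eqP zy]]]; subst z.
    by rewrite /fssd_adj /= in az.
Qed.
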